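(* Let $n\ge4$ and let $\sigma_1,\dots,\sigma_n>0$ be such that the sequence $(0,\sigma_1^2,\dots,\sigma_n^2,0)$ is concave. Then $$\frac{n-1}{n}\sum_{i=1}^n\sigma_i^2\;>\;2\max_{\substack{x\in\mathbb{R}^n\setminus\{0\}\\ x_1+\cdots+x_n=0}}\frac{\sigma_1^2x_1^2+\cdots+\sigma_n^2x_n^2}{x_1^2+\cdots+x_n^2}.$$
   Context: A finite sequence $(a_1,\dots,a_m)$ is concave if every three consecutive elements satisfy $a_{i+1}\ge\frac12(a_i+a_{i+2})$. *)

(* Defs.v *)
From Stdlib Require Import Reals Lra Lia Arith.
Open Scope R_scope.

Fixpoint sumR (n : nat) (f : nat -> R) : R :=
  match n with
  | O => 0
  | S k => sumR k f + f k
  end.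

Definition sum1 (n : nat) (f : nat -> R) : R := sumR n (fun k => f (S k)).

Definition concave_seq (m : nat) (a : nat -> R) : Prop :=
  forall i : nat, (i + 2 < m)%nat -> a (S i) >= (a i + a (S (S i))) / 2.

(* The sequence (0, sigma_1^2, ..., sigma_n^2, 0), of length n+2, indexed from 0. *)
Definition padded_sq (n : nat) (sigma : nat -> R) (i : nat) : R :=
  if Nat.eqb i 0 then 0 else if Nat.leb i n then (sigma i)^2 else 0.

Definition admissible (n : nat) (x : nat -> R) : Prop :=
  (exists i : nat, (1 <= i <= n)%nat /\ x i <> 0) /\ sum1 n x = 0.

Definition rquot (n : nat) (sigma x : nat -> R) : R :=
  sum1 n (fun i => (sigma i)^2 * (x i)^2) / sum1 n (fun i => (x i)^2).

Definition is_max_rquot (n : nat) (sigma : nat -> R) (M : R) : Prop :=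
  (exists x, admissible n x /\ rquot n sigma x = M) /\
  (forall x, admissible n x -> rquot n sigma x <= M).

(* Main.v *)
Require Import Defs.
From Stdlib Require Import Reals Lra Lia Arith Classical Bool Ranalysis5 Psatz.
Open Scope R_scope.

Lemma sumR_ext m f g : (forall i, (i < m)%nat -> f i = g i) -> sumR m f = sumR m g.
Proof. induction m; intros H; simpl; [reflexivity|]. rewrite IHm by (intros; apply H; lia). rewrite H by lia. reflexivity. Qed.

Lemma sumR_plus m f g : sumR m (fun i => f i + g i) = sumR m f + sumR m g.
Proof. induction m; simpl; [lra|]. rewrite IHm. lra. Qed.

Lemma sumR_minus m f g : sumR m (fun i => f i - g i) = sumR m f - sumR m g.
Proof. induction m; simpl; [lra|]. rewrite IHm. lra. Qed.

Lemma sumR_scal m c f : sumR m (fun i => c * f i) = c * sumR m f.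
Proof. induction m; simpl; [lra|]. rewrite IHm. lra. Qed.

Lemma sumR_const m c : sumR m (fun _ => c) = INR m * c.
Proof. induction m; simpl sumR; [simpl; lra|]. rewrite IHm, S_INR. lra. Qed.

Lemma sumR_le m f g : (forall i, (i < m)%nat -> f i <= g i) -> sumR m f <= sumR m g.
Proof. induction m; intros H; simpl; [lra|]. assert (H1 := H m ltac:(lia)).
  assert (sumR m f <= sumR m g) by (apply IHm; intros; apply H; lia). lra. Qed.

Lemma sumR_lt m f g : (forall i, (i < m)%nat -> f i <= g i) ->
  (exists j, (j < m)%nat /\ f j < g j) -> sumR m f < sumR m g.
Proof. induction m; intros H [j [Hj Hl]]; [lia|]. simpl.
  destruct (Nat.eq_dec j m) as [->|Hne].
  - assert (sumR m f <= sumR m g) by (apply sumR_le; intros; apply H; lia). lra.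
  - assert (sumR m f < sumR m g) by (apply IHm; [intros; apply H; lia| exists j; split; [lia|exact Hl]]).
    assert (H1 := H m ltac:(lia)). lra. Qed.

Lemma sumR_shift m f : sumR (S m) f = f 0%nat + sumR m (fun i => f (S i)).
Proof. induction m; simpl in *; [lra|]. rewrite IHm. lra. Qed.

Lemma sumR_app k m f : sumR (k+m) f = sumR k f + sumR m (fun i => f (k+i)%nat).
Proof. induction m; simpl. - rewrite Nat.add_0_r. lra. - rewrite Nat.add_succ_r. simpl. rewrite IHm. lra. Qed.

Lemma sumR_rev m f : sumR m f = sumR m (fun i => f (m-1-i)%nat).
Proof. revert f; induction m; intros f; [reflexivity|].
  rewrite sumR_shift. rewrite (IHm (fun i => f (S i))). change (sumR (S m) (fun i => f (S m - 1 - i)%nat))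
   with (sumR m (fun i => f (S m - 1 - i)%nat) + f (S m - 1 - m)%nat).
  replace (S m - 1 - m)%nat with 0%nat by lia.
  rewrite (sumR_ext m (fun i => f (S (m - 1 - i))) (fun i => f (S m - 1 - i)%nat)); [lra|].
  intros i Hi. f_equal. lia. Qed.

Lemma sumR_cont m (F : nat -> R -> R) x :
  (forall i, (i < m)%nat -> continuity_pt (F i) x) ->
  continuity_pt (fun y => sumR m (fun i => F i y)) x.
Proof. induction m; intros H; simpl.
  - apply continuity_pt_const. intros a b; reflexivity.
  - apply (continuity_pt_plus (fun y => sumR m (fun i => F i y)) (F m)).
    + apply IHm; intros; apply H; lia.
    + apply H; lia. Qed.

Lemma sum1_ext n f g : (forall i, (1 <= i <= n)%nat -> f i = g i) -> sum1 n f = sum1 n g.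
Proof. intros H. unfold sum1. apply sumR_ext. intros; apply H; lia. Qed.
Lemma sum1_plus n f g : sum1 n (fun i => f i + g i) = sum1 n f + sum1 n g.
Proof. unfold sum1. apply sumR_plus. Qed.
Lemma sum1_minus n f g : sum1 n (fun i => f i - g i) = sum1 n f - sum1 n g.
Proof. unfold sum1. apply sumR_minus. Qed.
Lemma sum1_scal n c f : sum1 n (fun i => c * f i) = c * sum1 n f.
Proof. unfold sum1. apply sumR_scal. Qed.
Lemma sum1_const n c : sum1 n (fun _ => c) = INR n * c.
Proof. unfold sum1. apply sumR_const. Qed.
Lemma sum1_le n f g : (forall i, (1 <= i <= n)%nat -> f i <= g i) -> sum1 n f <= sum1 n g.
Proof. intros H. unfold sum1. apply sumR_le. intros; apply H; lia. Qed.
Lemma sum1_lt n f g : (forall i, (1 <= i <= n)%nat -> f i <= g i) ->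
  (exists j, (1 <= j <= n)%nat /\ f j < g j) -> sum1 n f < sum1 n g.
Proof. intros H [j [Hj Hl]]. unfold sum1. apply sumR_lt. intros; apply H; lia.
  exists (j-1)%nat. replace (S (j-1)) with j by lia. split; [lia|exact Hl]. Qed.
Lemma sum1_pos n f : (forall i, (1 <= i <= n)%nat -> 0 <= f i) ->
  (exists j, (1 <= j <= n)%nat /\ 0 < f j) -> 0 < sum1 n f.
Proof. intros H1 H2. assert (sum1 n (fun _ => 0) < sum1 n f) by (apply sum1_lt; auto).
  rewrite sum1_const in H. lra. Qed.
Lemma sum1_nonneg n f : (forall i, (1 <= i <= n)%nat -> 0 <= f i) -> 0 <= sum1 n f.
Proof. intros H1. assert (sum1 n (fun _ => 0) <= sum1 n f) by (apply sum1_le; auto).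
  rewrite sum1_const in H. lra. Qed.

Lemma sum1_split n k f : (1 <= k <= n)%nat ->
  sum1 n f = sum1 n (fun i => if Nat.eqb i k then 0 else f i) + f k.
Proof. intros Hk. unfold sum1.
  assert (G : forall m, sumR m (fun j => f (S j)) =
     sumR m (fun j => if Nat.eqb (S j) k then 0 else f (S j)) + (if Nat.leb k m then f k else 0)).
  { induction m; cbn [sumR].
    - destruct (Nat.leb_spec k 0); [lia|lra].
    - rewrite IHm. destruct (Nat.leb_spec k m); destruct (Nat.eqb_spec (S m) k);
      destruct (Nat.leb_spec k (S m)); try lia; try lra. subst. lra. }
  rewrite G. destruct (Nat.leb_spec k n); [reflexivity|lia]. Qed.

Definition indic (k i : nat) : R := if Nat.eqb i k then 1 else 0.

Lemma sum1_ind n k : (1 <= k <= n)%nat -> sum1 n (indic k) = 1.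
Proof. intros Hk. rewrite (sum1_split n k) by exact Hk.
  rewrite (sum1_ext n _ (fun _ => 0)). rewrite sum1_const. unfold indic. rewrite Nat.eqb_refl. lra.
  intros i _. unfold indic. destruct (Nat.eqb i k); reflexivity. Qed.

Lemma argmax_gen (f : nat -> R) (P : nat -> bool) m :
  (exists i, (1 <= i <= m)%nat /\ P i = true) ->
  exists j, (1 <= j <= m)%nat /\ P j = true /\ forall i, (1 <= i <= m)%nat -> P i = true -> f i <= f j.
Proof. induction m; intros [i [Hi HP]]; [lia|].
  destruct (classic (exists i, (1 <= i <= m)%nat /\ P i = true)) as [Hex|Hno].
  - destruct (IHm Hex) as [j [Hj [HPj Hmax]]].
    destruct (P (S m)) eqn:E.
    + destruct (Rle_dec (f (S m)) (f j)).
      * exists j; split; [lia|split;[auto|]]. intros i' Hi' HP'. destruct (Nat.eq_dec i' (S m)); [subst; auto|apply Hmax; auto; lia].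
      * exists (S m); split; [lia|split;[auto|]]. intros i' Hi' HP'. destruct (Nat.eq_dec i' (S m)); [subst; lra|]. assert (f i' <= f j) by (apply Hmax; auto; lia). lra.
    + exists j; split; [lia|split;[auto|]]. intros i' Hi' HP'. destruct (Nat.eq_dec i' (S m)); [subst; congruence|apply Hmax; auto; lia].
  - assert (i = S m). { destruct (Nat.eq_dec i (S m)); auto. exfalso; apply Hno; exists i; split; [lia|auto]. }
    subst. exists (S m); split; [lia|split;[auto|]]. intros i' Hi' HP'.
    destruct (Nat.eq_dec i' (S m)); [subst; lra|]. exfalso; apply Hno; exists i'; split; [lia|auto]. Qed.

Lemma pow2_gt_0 x : x <> 0 -> 0 < x ^ 2.
Proof. intros H. simpl. rewrite Rmult_1_r. destruct (Rlt_or_le 0 x); [nra|]. destruct H0; [nra|congruence]. Qed.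

Lemma pw_ineq d y t : 0 < d -> d * y ^ 2 >= 2 * t * y - t ^ 2 * / d.
Proof. intros Hd. assert (0 <= (d*y - t)^2 / d).
  { apply Rmult_le_pos. apply pow2_ge_0. left; apply Rinv_0_lt_compat; lra. }
  assert ((d*y - t)^2 / d = d * y ^ 2 - (2 * t * y - t ^ 2 * / d)) by (field; lra). lra. Qed.

Lemma formL n k d y :
 (1 <= k <= n)%nat ->
 (forall i, (1<=i<=n)%nat -> i <> k -> 0 < d i) ->
 sum1 n y = 0 ->
 0 < sum1 n (fun i => if Nat.eqb i k then 0 else / d i) ->
 sum1 n (fun i => if Nat.eqb i k then 0 else / d i) * sum1 n (fun i => d i * y i ^ 2)
   >= y k ^ 2 * (1 + d k * sum1 n (fun i => if Nat.eqb i k then 0 else / d i)).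
Proof. intros Hk Hd Hy HT.
  set (T := sum1 n (fun i => if Nat.eqb i k then 0 else / d i)) in *.
  set (t := - y k / T).
  rewrite (sum1_split n k) by exact Hk.
  set (Q := sum1 n _).
  assert (HQ : Q >= sum1 n (fun i => 2 * t * (if Nat.eqb i k then 0 else y i)
                      - t ^ 2 * (if Nat.eqb i k then 0 else / d i))).
  { apply Rle_ge, sum1_le. intros i Hi. destruct (Nat.eqb_spec i k). lra.
    apply Rge_le, pw_ineq, Hd; auto. }
  rewrite sum1_minus, !sum1_scal in HQ. fold T in HQ.
  assert (Hs : sum1 n (fun i => if Nat.eqb i k then 0 else y i) = - y k).
  { rewrite (sum1_split n k) in Hy by exact Hk. lra. }
  rewrite Hs in HQ.
  assert (T * Q >= y k ^ 2).
  { assert (T * (2 * t * - y k - t ^ 2 * T) = y k ^ 2) by (unfold t; field; lra).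
    apply Rle_ge. rewrite <- H. apply Rmult_le_compat_l; lra. }
  assert (T * (Q + d k * y k ^ 2) = T*Q + y k ^ 2 * (d k * T)) by ring. lra. Qed.

Lemma T_pos n k d : (2 <= n)%nat -> (1 <= k <= n)%nat ->
 (forall i, (1<=i<=n)%nat -> i <> k -> 0 < d i) ->
 0 < sum1 n (fun i => if Nat.eqb i k then 0 else / d i).
Proof. intros Hn Hk Hd. apply sum1_pos.
  - intros i Hi. destruct (Nat.eqb_spec i k). lra. left; apply Rinv_0_lt_compat, Hd; auto.
  - exists (if Nat.eqb k 1 then 2%nat else 1%nat).
    destruct (Nat.eqb_spec k 1); (split; [lia|]).
    + destruct (Nat.eqb_spec 2 k); [lia|]. apply Rinv_0_lt_compat, Hd; lia.
    + destruct (Nat.eqb_spec 1 k); [lia|]. apply Rinv_0_lt_compat, Hd; lia. Qed.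

Lemma formL_nonneg n k d y :
 (2 <= n)%nat -> (1 <= k <= n)%nat ->
 (forall i, (1<=i<=n)%nat -> i <> k -> 0 < d i) ->
 sum1 n y = 0 ->
 0 <= 1 + d k * sum1 n (fun i => if Nat.eqb i k then 0 else / d i) ->
 0 <= sum1 n (fun i => d i * y i ^ 2).
Proof. intros Hn Hk Hd Hy H1. assert (HT := T_pos n k d Hn Hk Hd).
  assert (HL := formL n k d y Hk Hd Hy HT).
  set (T := sum1 n (fun i => if Nat.eqb i k then 0 else / d i)) in *. set (F := sum1 n (fun i => d i * y i ^ 2)) in *.
  assert (0 <= y k ^ 2 * (1 + d k * T)) by (apply Rmult_le_pos; [apply pow2_ge_0|lra]).
  destruct (Rle_or_lt 0 F); auto. assert (T * F < 0) by (apply Rmult_pos_neg; lra). lra. Qed.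

Lemma formL_pos n k d y :
 (2 <= n)%nat -> (1 <= k <= n)%nat ->
 (forall i, (1<=i<=n)%nat -> i <> k -> 0 < d i) ->
 sum1 n y = 0 ->
 (exists j, (1 <= j <= n)%nat /\ y j <> 0) ->
 0 < 1 + d k * sum1 n (fun i => if Nat.eqb i k then 0 else / d i) ->
 0 < sum1 n (fun i => d i * y i ^ 2).
Proof. intros Hn Hk Hd Hy [j [Hj Hyj]] H1. assert (HT := T_pos n k d Hn Hk Hd).
  destruct (Req_dec (y k) 0) as [Hyk|Hyk].
  - rewrite (sum1_split n k) by exact Hk. rewrite Hyk.
    assert (0 < sum1 n (fun i => if Nat.eqb i k then 0 else d i * y i ^ 2)).
    { apply sum1_pos.
      - intros i Hi. destruct (Nat.eqb_spec i k). lra.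
        apply Rmult_le_pos. left; apply Hd; auto. apply pow2_ge_0.
      - exists j. split; auto. destruct (Nat.eqb_spec j k). subst; congruence.
        apply Rmult_lt_0_compat. apply Hd; auto. apply pow2_gt_0; auto. }
    assert (d k * 0 ^ 2 = 0) by ring. lra.
  - assert (HL := formL n k d y Hk Hd Hy HT).
    set (T := sum1 n (fun i => if Nat.eqb i k then 0 else / d i)) in *. set (F := sum1 n (fun i => d i * y i ^ 2)) in *.
    assert (0 < y k ^ 2 * (1 + d k * T)) by (apply Rmult_lt_0_compat; [apply pow2_gt_0; auto|lra]).
    destruct (Rle_or_lt F 0); auto. assert (T * F <= 0) by nra. lra.
Qed.

Section Tent.
Variable f : nat -> R.
Variable m : nat.
Hypothesis f0 : f 0%nat = 0.
Hypothesis fc : forall i, (i+2 <= m)%nat -> 2 * f (S i) >= f i + f (S (S i)).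

Lemma tent1 : forall i, (i + 1 <= m)%nat -> INR (S i) * f i >= INR i * f (S i).
Proof. induction i; intros Hi.
  - rewrite f0. simpl. lra.
  - assert (H1 := IHi ltac:(lia)). assert (H2 := fc i ltac:(lia)).
    rewrite !S_INR in *. assert (0 <= INR i) by apply pos_INR.
    assert (0 <= (INR i + 1) * (2 * f (S i) - f i - f (S (S i)))) by (apply Rmult_le_pos; lra).
    lra. Qed.

Lemma tent2 : forall d i, (i + d <= m)%nat -> INR (i+d) * f i >= INR i * f (i+d)%nat.
Proof. induction d; intros i Hi.
  - rewrite Nat.add_0_r. lra.
  - assert (H1 := IHd i ltac:(lia)). assert (H2 := tent1 (i+d) ltac:(lia)).
    replace (i + S d)%nat with (S (i + d)) by lia.
    rewrite S_INR in *.
    set (K := INR (i+d)) in *. set (I := INR i) in *.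
    assert (0 <= I) by apply pos_INR. assert (I <= K) by (apply le_INR; lia).
    destruct (Rle_lt_or_eq_dec 0 K) as [HK|HK]; [unfold K; apply pos_INR| |].
    + assert (0 <= (K+1) * (K * f i - I * f (i+d)%nat)) by (apply Rmult_le_pos; lra).
      assert (0 <= I * ((K+1) * f (i+d)%nat - K * f (S (i+d)))) by (apply Rmult_le_pos; lra).
      assert (0 <= K * ((K+1) * f i - I * f (S (i+d)))) by lra.
      apply Rle_ge.
      apply (Rmult_le_reg_l K); [lra|]. lra.
    + assert (I = 0) by lra. assert (i = 0%nat) by (apply INR_eq; change (INR i) with I; simpl; lra). subst I. subst i. rewrite f0. simpl INR. lra.
Qed.

Lemma tentsum : forall k j, (1 <= k <= m)%nat -> (j <= k)%nat ->
  2 * INR k * sumR j (fun i => f (S i)) >= f k * INR j * INR (S j).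
Proof. intros k j Hk. induction j; intros Hj.
  - simpl. lra.
  - assert (H1 := IHj ltac:(lia)).
    assert (H2 := tent2 (k - S j) (S j) ltac:(lia)).
    replace (S j + (k - S j))%nat with k in H2 by lia.
    cbn [sumR]. rewrite !S_INR in *. lra. Qed.
End Tent.
Lemma case1 a1 a2 a3 a4 c : c = 3*(a1+a2+a3+a4)/8 -> 0<a1 -> 0<a2 -> 0<a3 -> 0<a4 -> 2*a1 >= a2 -> 2*a2>=a1+a3 -> 2*a3>=a2+a4 -> 2*a4>=a3 ->
 a2 <= a1 -> a3 <= a1 -> a4 <= a1 ->
  0 < (c - a2) /\ 0 < (c - a3) /\ 0 < (c - a4) /\ (c - a1)*((c - a2)*(c - a3)+(c - a2)*(c - a4)+(c - a3)*(c - a4)) + (c - a2)*(c - a3)*(c - a4) > 0.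
Proof. intros Hc. subst c. intros.
  split; [lra|split;[lra|split;[lra|]]].
  assert (0 <= (2*a1-a2)*(2*a1-a2)*(2*a1-a2)) by (repeat apply Rmult_le_pos; lra).
  assert (0 <= (2*a1-a2)*(2*a1-a2)*(2*a2-a1-a3)) by (repeat apply Rmult_le_pos; lra).
  assert (0 <= (2*a1-a2)*(2*a1-a2)*(2*a3-a2-a4)) by (repeat apply Rmult_le_pos; lra).
  assert (0 <= (2*a1-a2)*(2*a1-a2)*(2*a4-a3)) by (repeat apply Rmult_le_pos; lra).
  assert (0 <= (2*a1-a2)*(2*a1-a2)*(a1-a2)) by (repeat apply Rmult_le_pos; lra).
  assert (0 <= (2*a1-a2)*(2*a1-a2)*(a1-a3)) by (repeat apply Rmult_le_pos; lra).
  assert (0 <= (2*a1-a2)*(2*a1-a2)*(a1-a4)) by (repeat apply Rmult_le_pos; lra).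
  assert (0 <= (2*a1-a2)*(2*a2-a1-a3)*(2*a2-a1-a3)) by (repeat apply Rmult_le_pos; lra).
  assert (0 <= (2*a1-a2)*(2*a2-a1-a3)*(2*a3-a2-a4)) by (repeat apply Rmult_le_pos; lra).
  assert (0 <= (2*a1-a2)*(2*a2-a1-a3)*(2*a4-a3)) by (repeat apply Rmult_le_pos; lra).
  assert (0 <= (2*a1-a2)*(2*a2-a1-a3)*(a1-a2)) by (repeat apply Rmult_le_pos; lra).
  assert (0 <= (2*a1-a2)*(2*a2-a1-a3)*(a1-a3)) by (repeat apply Rmult_le_pos; lra).
  assert (0 <= (2*a1-a2)*(2*a2-a1-a3)*(a1-a4)) by (repeat apply Rmult_le_pos; lra).
  assert (0 <= (2*a1-a2)*(2*a3-a2-a4)*(2*a3-a2-a4)) by (repeat apply Rmult_le_pos; lra).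
  assert (0 <= (2*a1-a2)*(2*a3-a2-a4)*(2*a4-a3)) by (repeat apply Rmult_le_pos; lra).
  assert (0 <= (2*a1-a2)*(2*a3-a2-a4)*(a1-a2)) by (repeat apply Rmult_le_pos; lra).
  assert (0 <= (2*a1-a2)*(2*a3-a2-a4)*(a1-a3)) by (repeat apply Rmult_le_pos; lra).
  assert (0 <= (2*a1-a2)*(2*a3-a2-a4)*(a1-a4)) by (repeat apply Rmult_le_pos; lra).
  assert (0 <= (2*a1-a2)*(2*a4-a3)*(2*a4-a3)) by (repeat apply Rmult_le_pos; lra).
  assert (0 <= (2*a1-a2)*(2*a4-a3)*(a1-a2)) by (repeat apply Rmult_le_pos; lra).
  assert (0 <= (2*a1-a2)*(2*a4-a3)*(a1-a3)) by (repeat apply Rmult_le_pos; lra).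
  assert (0 <= (2*a1-a2)*(2*a4-a3)*(a1-a4)) by (repeat apply Rmult_le_pos; lra).
  assert (0 <= (2*a1-a2)*(a1-a2)*(a1-a2)) by (repeat apply Rmult_le_pos; lra).
  assert (0 <= (2*a1-a2)*(a1-a2)*(a1-a3)) by (repeat apply Rmult_le_pos; lra).
  assert (0 <= (2*a1-a2)*(a1-a2)*(a1-a4)) by (repeat apply Rmult_le_pos; lra).
  assert (0 <= (2*a1-a2)*(a1-a3)*(a1-a3)) by (repeat apply Rmult_le_pos; lra).
  assert (0 <= (2*a1-a2)*(a1-a3)*(a1-a4)) by (repeat apply Rmult_le_pos; lra).
  assert (0 <= (2*a1-a2)*(a1-a4)*(a1-a4)) by (repeat apply Rmult_le_pos; lra).
  assert (0 <= (2*a2-a1-a3)*(2*a2-a1-a3)*(2*a2-a1-a3)) by (repeat apply Rmult_le_pos; lra).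
  assert (0 <= (2*a2-a1-a3)*(2*a2-a1-a3)*(2*a3-a2-a4)) by (repeat apply Rmult_le_pos; lra).
  assert (0 <= (2*a2-a1-a3)*(2*a2-a1-a3)*(2*a4-a3)) by (repeat apply Rmult_le_pos; lra).
  assert (0 <= (2*a2-a1-a3)*(2*a2-a1-a3)*(a1-a2)) by (repeat apply Rmult_le_pos; lra).
  assert (0 <= (2*a2-a1-a3)*(2*a2-a1-a3)*(a1-a3)) by (repeat apply Rmult_le_pos; lra).
  assert (0 <= (2*a2-a1-a3)*(2*a2-a1-a3)*(a1-a4)) by (repeat apply Rmult_le_pos; lra).
  assert (0 <= (2*a2-a1-a3)*(2*a3-a2-a4)*(2*a3-a2-a4)) by (repeat apply Rmult_le_pos; lra).
  assert (0 <= (2*a2-a1-a3)*(2*a3-a2-a4)*(2*a4-a3)) by (repeat apply Rmult_le_pos; lra).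
  assert (0 <= (2*a2-a1-a3)*(2*a3-a2-a4)*(a1-a2)) by (repeat apply Rmult_le_pos; lra).
  assert (0 <= (2*a2-a1-a3)*(2*a3-a2-a4)*(a1-a3)) by (repeat apply Rmult_le_pos; lra).
  assert (0 <= (2*a2-a1-a3)*(2*a3-a2-a4)*(a1-a4)) by (repeat apply Rmult_le_pos; lra).
  assert (0 <= (2*a2-a1-a3)*(2*a4-a3)*(2*a4-a3)) by (repeat apply Rmult_le_pos; lra).
  assert (0 <= (2*a2-a1-a3)*(2*a4-a3)*(a1-a2)) by (repeat apply Rmult_le_pos; lra).
  assert (0 <= (2*a2-a1-a3)*(2*a4-a3)*(a1-a3)) by (repeat apply Rmult_le_pos; lra).
  assert (0 <= (2*a2-a1-a3)*(2*a4-a3)*(a1-a4)) by (repeat apply Rmult_le_pos; lra).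
  assert (0 <= (2*a2-a1-a3)*(a1-a2)*(a1-a2)) by (repeat apply Rmult_le_pos; lra).
  assert (0 <= (2*a2-a1-a3)*(a1-a2)*(a1-a3)) by (repeat apply Rmult_le_pos; lra).
  assert (0 <= (2*a2-a1-a3)*(a1-a2)*(a1-a4)) by (repeat apply Rmult_le_pos; lra).
  assert (0 <= (2*a2-a1-a3)*(a1-a3)*(a1-a3)) by (repeat apply Rmult_le_pos; lra).
  assert (0 <= (2*a2-a1-a3)*(a1-a3)*(a1-a4)) by (repeat apply Rmult_le_pos; lra).
  assert (0 <= (2*a2-a1-a3)*(a1-a4)*(a1-a4)) by (repeat apply Rmult_le_pos; lra).
  assert (0 <= (2*a3-a2-a4)*(2*a3-a2-a4)*(2*a3-a2-a4)) by (repeat apply Rmult_le_pos; lra).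
  assert (0 <= (2*a3-a2-a4)*(2*a3-a2-a4)*(2*a4-a3)) by (repeat apply Rmult_le_pos; lra).
  assert (0 <= (2*a3-a2-a4)*(2*a3-a2-a4)*(a1-a2)) by (repeat apply Rmult_le_pos; lra).
  assert (0 <= (2*a3-a2-a4)*(2*a3-a2-a4)*(a1-a3)) by (repeat apply Rmult_le_pos; lra).
  assert (0 <= (2*a3-a2-a4)*(2*a3-a2-a4)*(a1-a4)) by (repeat apply Rmult_le_pos; lra).
  assert (0 <= (2*a3-a2-a4)*(2*a4-a3)*(2*a4-a3)) by (repeat apply Rmult_le_pos; lra).
  assert (0 <= (2*a3-a2-a4)*(2*a4-a3)*(a1-a2)) by (repeat apply Rmult_le_pos; lra).
  assert (0 <= (2*a3-a2-a4)*(2*a4-a3)*(a1-a3)) by (repeat apply Rmult_le_pos; lra).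
  assert (0 <= (2*a3-a2-a4)*(2*a4-a3)*(a1-a4)) by (repeat apply Rmult_le_pos; lra).
  assert (0 <= (2*a3-a2-a4)*(a1-a2)*(a1-a2)) by (repeat apply Rmult_le_pos; lra).
  assert (0 <= (2*a3-a2-a4)*(a1-a2)*(a1-a3)) by (repeat apply Rmult_le_pos; lra).
  assert (0 <= (2*a3-a2-a4)*(a1-a2)*(a1-a4)) by (repeat apply Rmult_le_pos; lra).
  assert (0 <= (2*a3-a2-a4)*(a1-a3)*(a1-a3)) by (repeat apply Rmult_le_pos; lra).
  assert (0 <= (2*a3-a2-a4)*(a1-a3)*(a1-a4)) by (repeat apply Rmult_le_pos; lra).
  assert (0 <= (2*a3-a2-a4)*(a1-a4)*(a1-a4)) by (repeat apply Rmult_le_pos; lra).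
  assert (0 <= (2*a4-a3)*(2*a4-a3)*(2*a4-a3)) by (repeat apply Rmult_le_pos; lra).
  assert (0 <= (2*a4-a3)*(2*a4-a3)*(a1-a2)) by (repeat apply Rmult_le_pos; lra).
  assert (0 <= (2*a4-a3)*(2*a4-a3)*(a1-a3)) by (repeat apply Rmult_le_pos; lra).
  assert (0 <= (2*a4-a3)*(2*a4-a3)*(a1-a4)) by (repeat apply Rmult_le_pos; lra).
  assert (0 <= (2*a4-a3)*(a1-a2)*(a1-a2)) by (repeat apply Rmult_le_pos; lra).
  assert (0 <= (2*a4-a3)*(a1-a2)*(a1-a3)) by (repeat apply Rmult_le_pos; lra).
  assert (0 <= (2*a4-a3)*(a1-a2)*(a1-a4)) by (repeat apply Rmult_le_pos; lra).
  assert (0 <= (2*a4-a3)*(a1-a3)*(a1-a3)) by (repeat apply Rmult_le_pos; lra).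
  assert (0 <= (2*a4-a3)*(a1-a3)*(a1-a4)) by (repeat apply Rmult_le_pos; lra).
  assert (0 <= (2*a4-a3)*(a1-a4)*(a1-a4)) by (repeat apply Rmult_le_pos; lra).
  assert (0 <= (a1-a2)*(a1-a2)*(a1-a2)) by (repeat apply Rmult_le_pos; lra).
  assert (0 <= (a1-a2)*(a1-a2)*(a1-a3)) by (repeat apply Rmult_le_pos; lra).
  assert (0 <= (a1-a2)*(a1-a2)*(a1-a4)) by (repeat apply Rmult_le_pos; lra).
  assert (0 <= (a1-a2)*(a1-a3)*(a1-a3)) by (repeat apply Rmult_le_pos; lra).
  assert (0 <= (a1-a2)*(a1-a3)*(a1-a4)) by (repeat apply Rmult_le_pos; lra).
  assert (0 <= (a1-a2)*(a1-a4)*(a1-a4)) by (repeat apply Rmult_le_pos; lra).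
  assert (0 <= (a1-a3)*(a1-a3)*(a1-a3)) by (repeat apply Rmult_le_pos; lra).
  assert (0 <= (a1-a3)*(a1-a3)*(a1-a4)) by (repeat apply Rmult_le_pos; lra).
  assert (0 <= (a1-a3)*(a1-a4)*(a1-a4)) by (repeat apply Rmult_le_pos; lra).
  assert (0 <= (a1-a4)*(a1-a4)*(a1-a4)) by (repeat apply Rmult_le_pos; lra).
  assert (0 < a1*a1*a1) by (repeat apply Rmult_lt_0_compat; lra).
  lra. Qed.
Lemma case2 a1 a2 a3 a4 c : c = 3*(a1+a2+a3+a4)/8 -> 0<a1 -> 0<a2 -> 0<a3 -> 0<a4 -> 2*a1 >= a2 -> 2*a2>=a1+a3 -> 2*a3>=a2+a4 -> 2*a4>=a3 ->
 a1 <= a2 -> a3 <= a2 -> a4 <= a2 ->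
  0 < (c - a1) /\ 0 < (c - a3) /\ 0 < (c - a4) /\ (c - a2)*((c - a1)*(c - a3)+(c - a1)*(c - a4)+(c - a3)*(c - a4)) + (c - a1)*(c - a3)*(c - a4) > 0.
Proof. intros Hc. subst c. intros.
  split; [lra|split;[lra|split;[lra|]]].
  assert (0 <= (2*a1-a2)*(2*a1-a2)*(2*a1-a2)) by (repeat apply Rmult_le_pos; lra).
  assert (0 <= (2*a1-a2)*(2*a1-a2)*(2*a2-a1-a3)) by (repeat apply Rmult_le_pos; lra).
  assert (0 <= (2*a1-a2)*(2*a1-a2)*(2*a3-a2-a4)) by (repeat apply Rmult_le_pos; lra).
  assert (0 <= (2*a1-a2)*(2*a1-a2)*(2*a4-a3)) by (repeat apply Rmult_le_pos; lra).
  assert (0 <= (2*a1-a2)*(2*a1-a2)*(a2-a1)) by (repeat apply Rmult_le_pos; lra).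
  assert (0 <= (2*a1-a2)*(2*a1-a2)*(a2-a3)) by (repeat apply Rmult_le_pos; lra).
  assert (0 <= (2*a1-a2)*(2*a1-a2)*(a2-a4)) by (repeat apply Rmult_le_pos; lra).
  assert (0 <= (2*a1-a2)*(2*a2-a1-a3)*(2*a2-a1-a3)) by (repeat apply Rmult_le_pos; lra).
  assert (0 <= (2*a1-a2)*(2*a2-a1-a3)*(2*a3-a2-a4)) by (repeat apply Rmult_le_pos; lra).
  assert (0 <= (2*a1-a2)*(2*a2-a1-a3)*(2*a4-a3)) by (repeat apply Rmult_le_pos; lra).
  assert (0 <= (2*a1-a2)*(2*a2-a1-a3)*(a2-a1)) by (repeat apply Rmult_le_pos; lra).
  assert (0 <= (2*a1-a2)*(2*a2-a1-a3)*(a2-a3)) by (repeat apply Rmult_le_pos; lra).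
  assert (0 <= (2*a1-a2)*(2*a2-a1-a3)*(a2-a4)) by (repeat apply Rmult_le_pos; lra).
  assert (0 <= (2*a1-a2)*(2*a3-a2-a4)*(2*a3-a2-a4)) by (repeat apply Rmult_le_pos; lra).
  assert (0 <= (2*a1-a2)*(2*a3-a2-a4)*(2*a4-a3)) by (repeat apply Rmult_le_pos; lra).
  assert (0 <= (2*a1-a2)*(2*a3-a2-a4)*(a2-a1)) by (repeat apply Rmult_le_pos; lra).
  assert (0 <= (2*a1-a2)*(2*a3-a2-a4)*(a2-a3)) by (repeat apply Rmult_le_pos; lra).
  assert (0 <= (2*a1-a2)*(2*a3-a2-a4)*(a2-a4)) by (repeat apply Rmult_le_pos; lra).
  assert (0 <= (2*a1-a2)*(2*a4-a3)*(2*a4-a3)) by (repeat apply Rmult_le_pos; lra).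
  assert (0 <= (2*a1-a2)*(2*a4-a3)*(a2-a1)) by (repeat apply Rmult_le_pos; lra).
  assert (0 <= (2*a1-a2)*(2*a4-a3)*(a2-a3)) by (repeat apply Rmult_le_pos; lra).
  assert (0 <= (2*a1-a2)*(2*a4-a3)*(a2-a4)) by (repeat apply Rmult_le_pos; lra).
  assert (0 <= (2*a1-a2)*(a2-a1)*(a2-a1)) by (repeat apply Rmult_le_pos; lra).
  assert (0 <= (2*a1-a2)*(a2-a1)*(a2-a3)) by (repeat apply Rmult_le_pos; lra).
  assert (0 <= (2*a1-a2)*(a2-a1)*(a2-a4)) by (repeat apply Rmult_le_pos; lra).
  assert (0 <= (2*a1-a2)*(a2-a3)*(a2-a3)) by (repeat apply Rmult_le_pos; lra).
  assert (0 <= (2*a1-a2)*(a2-a3)*(a2-a4)) by (repeat apply Rmult_le_pos; lra).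
  assert (0 <= (2*a1-a2)*(a2-a4)*(a2-a4)) by (repeat apply Rmult_le_pos; lra).
  assert (0 <= (2*a2-a1-a3)*(2*a2-a1-a3)*(2*a2-a1-a3)) by (repeat apply Rmult_le_pos; lra).
  assert (0 <= (2*a2-a1-a3)*(2*a2-a1-a3)*(2*a3-a2-a4)) by (repeat apply Rmult_le_pos; lra).
  assert (0 <= (2*a2-a1-a3)*(2*a2-a1-a3)*(2*a4-a3)) by (repeat apply Rmult_le_pos; lra).
  assert (0 <= (2*a2-a1-a3)*(2*a2-a1-a3)*(a2-a1)) by (repeat apply Rmult_le_pos; lra).
  assert (0 <= (2*a2-a1-a3)*(2*a2-a1-a3)*(a2-a3)) by (repeat apply Rmult_le_pos; lra).
  assert (0 <= (2*a2-a1-a3)*(2*a2-a1-a3)*(a2-a4)) by (repeat apply Rmult_le_pos; lra).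
  assert (0 <= (2*a2-a1-a3)*(2*a3-a2-a4)*(2*a3-a2-a4)) by (repeat apply Rmult_le_pos; lra).
  assert (0 <= (2*a2-a1-a3)*(2*a3-a2-a4)*(2*a4-a3)) by (repeat apply Rmult_le_pos; lra).
  assert (0 <= (2*a2-a1-a3)*(2*a3-a2-a4)*(a2-a1)) by (repeat apply Rmult_le_pos; lra).
  assert (0 <= (2*a2-a1-a3)*(2*a3-a2-a4)*(a2-a3)) by (repeat apply Rmult_le_pos; lra).
  assert (0 <= (2*a2-a1-a3)*(2*a3-a2-a4)*(a2-a4)) by (repeat apply Rmult_le_pos; lra).
  assert (0 <= (2*a2-a1-a3)*(2*a4-a3)*(2*a4-a3)) by (repeat apply Rmult_le_pos; lra).
  assert (0 <= (2*a2-a1-a3)*(2*a4-a3)*(a2-a1)) by (repeat apply Rmult_le_pos; lra).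
  assert (0 <= (2*a2-a1-a3)*(2*a4-a3)*(a2-a3)) by (repeat apply Rmult_le_pos; lra).
  assert (0 <= (2*a2-a1-a3)*(2*a4-a3)*(a2-a4)) by (repeat apply Rmult_le_pos; lra).
  assert (0 <= (2*a2-a1-a3)*(a2-a1)*(a2-a1)) by (repeat apply Rmult_le_pos; lra).
  assert (0 <= (2*a2-a1-a3)*(a2-a1)*(a2-a3)) by (repeat apply Rmult_le_pos; lra).
  assert (0 <= (2*a2-a1-a3)*(a2-a1)*(a2-a4)) by (repeat apply Rmult_le_pos; lra).
  assert (0 <= (2*a2-a1-a3)*(a2-a3)*(a2-a3)) by (repeat apply Rmult_le_pos; lra).
  assert (0 <= (2*a2-a1-a3)*(a2-a3)*(a2-a4)) by (repeat apply Rmult_le_pos; lra).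
  assert (0 <= (2*a2-a1-a3)*(a2-a4)*(a2-a4)) by (repeat apply Rmult_le_pos; lra).
  assert (0 <= (2*a3-a2-a4)*(2*a3-a2-a4)*(2*a3-a2-a4)) by (repeat apply Rmult_le_pos; lra).
  assert (0 <= (2*a3-a2-a4)*(2*a3-a2-a4)*(2*a4-a3)) by (repeat apply Rmult_le_pos; lra).
  assert (0 <= (2*a3-a2-a4)*(2*a3-a2-a4)*(a2-a1)) by (repeat apply Rmult_le_pos; lra).
  assert (0 <= (2*a3-a2-a4)*(2*a3-a2-a4)*(a2-a3)) by (repeat apply Rmult_le_pos; lra).
  assert (0 <= (2*a3-a2-a4)*(2*a3-a2-a4)*(a2-a4)) by (repeat apply Rmult_le_pos; lra).
  assert (0 <= (2*a3-a2-a4)*(2*a4-a3)*(2*a4-a3)) by (repeat apply Rmult_le_pos; lra).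
  assert (0 <= (2*a3-a2-a4)*(2*a4-a3)*(a2-a1)) by (repeat apply Rmult_le_pos; lra).
  assert (0 <= (2*a3-a2-a4)*(2*a4-a3)*(a2-a3)) by (repeat apply Rmult_le_pos; lra).
  assert (0 <= (2*a3-a2-a4)*(2*a4-a3)*(a2-a4)) by (repeat apply Rmult_le_pos; lra).
  assert (0 <= (2*a3-a2-a4)*(a2-a1)*(a2-a1)) by (repeat apply Rmult_le_pos; lra).
  assert (0 <= (2*a3-a2-a4)*(a2-a1)*(a2-a3)) by (repeat apply Rmult_le_pos; lra).
  assert (0 <= (2*a3-a2-a4)*(a2-a1)*(a2-a4)) by (repeat apply Rmult_le_pos; lra).
  assert (0 <= (2*a3-a2-a4)*(a2-a3)*(a2-a3)) by (repeat apply Rmult_le_pos; lra).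
  assert (0 <= (2*a3-a2-a4)*(a2-a3)*(a2-a4)) by (repeat apply Rmult_le_pos; lra).
  assert (0 <= (2*a3-a2-a4)*(a2-a4)*(a2-a4)) by (repeat apply Rmult_le_pos; lra).
  assert (0 <= (2*a4-a3)*(2*a4-a3)*(2*a4-a3)) by (repeat apply Rmult_le_pos; lra).
  assert (0 <= (2*a4-a3)*(2*a4-a3)*(a2-a1)) by (repeat apply Rmult_le_pos; lra).
  assert (0 <= (2*a4-a3)*(2*a4-a3)*(a2-a3)) by (repeat apply Rmult_le_pos; lra).
  assert (0 <= (2*a4-a3)*(2*a4-a3)*(a2-a4)) by (repeat apply Rmult_le_pos; lra).
  assert (0 <= (2*a4-a3)*(a2-a1)*(a2-a1)) by (repeat apply Rmult_le_pos; lra).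
  assert (0 <= (2*a4-a3)*(a2-a1)*(a2-a3)) by (repeat apply Rmult_le_pos; lra).
  assert (0 <= (2*a4-a3)*(a2-a1)*(a2-a4)) by (repeat apply Rmult_le_pos; lra).
  assert (0 <= (2*a4-a3)*(a2-a3)*(a2-a3)) by (repeat apply Rmult_le_pos; lra).
  assert (0 <= (2*a4-a3)*(a2-a3)*(a2-a4)) by (repeat apply Rmult_le_pos; lra).
  assert (0 <= (2*a4-a3)*(a2-a4)*(a2-a4)) by (repeat apply Rmult_le_pos; lra).
  assert (0 <= (a2-a1)*(a2-a1)*(a2-a1)) by (repeat apply Rmult_le_pos; lra).
  assert (0 <= (a2-a1)*(a2-a1)*(a2-a3)) by (repeat apply Rmult_le_pos; lra).
  assert (0 <= (a2-a1)*(a2-a1)*(a2-a4)) by (repeat apply Rmult_le_pos; lra).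
  assert (0 <= (a2-a1)*(a2-a3)*(a2-a3)) by (repeat apply Rmult_le_pos; lra).
  assert (0 <= (a2-a1)*(a2-a3)*(a2-a4)) by (repeat apply Rmult_le_pos; lra).
  assert (0 <= (a2-a1)*(a2-a4)*(a2-a4)) by (repeat apply Rmult_le_pos; lra).
  assert (0 <= (a2-a3)*(a2-a3)*(a2-a3)) by (repeat apply Rmult_le_pos; lra).
  assert (0 <= (a2-a3)*(a2-a3)*(a2-a4)) by (repeat apply Rmult_le_pos; lra).
  assert (0 <= (a2-a3)*(a2-a4)*(a2-a4)) by (repeat apply Rmult_le_pos; lra).
  assert (0 <= (a2-a4)*(a2-a4)*(a2-a4)) by (repeat apply Rmult_le_pos; lra).
  assert (0 < a2*a2*a2) by (repeat apply Rmult_lt_0_compat; lra).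
  lra. Qed.
Lemma case3 a1 a2 a3 a4 c : c = 3*(a1+a2+a3+a4)/8 -> 0<a1 -> 0<a2 -> 0<a3 -> 0<a4 -> 2*a1 >= a2 -> 2*a2>=a1+a3 -> 2*a3>=a2+a4 -> 2*a4>=a3 ->
 a1 <= a3 -> a2 <= a3 -> a4 <= a3 ->
  0 < (c - a1) /\ 0 < (c - a2) /\ 0 < (c - a4) /\ (c - a3)*((c - a1)*(c - a2)+(c - a1)*(c - a4)+(c - a2)*(c - a4)) + (c - a1)*(c - a2)*(c - a4) > 0.
Proof. intros Hc. subst c. intros.
  split; [lra|split;[lra|split;[lra|]]].
  assert (0 <= (2*a1-a2)*(2*a1-a2)*(2*a1-a2)) by (repeat apply Rmult_le_pos; lra).
  assert (0 <= (2*a1-a2)*(2*a1-a2)*(2*a2-a1-a3)) by (repeat apply Rmult_le_pos; lra).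
  assert (0 <= (2*a1-a2)*(2*a1-a2)*(2*a3-a2-a4)) by (repeat apply Rmult_le_pos; lra).
  assert (0 <= (2*a1-a2)*(2*a1-a2)*(2*a4-a3)) by (repeat apply Rmult_le_pos; lra).
  assert (0 <= (2*a1-a2)*(2*a1-a2)*(a3-a1)) by (repeat apply Rmult_le_pos; lra).
  assert (0 <= (2*a1-a2)*(2*a1-a2)*(a3-a2)) by (repeat apply Rmult_le_pos; lra).
  assert (0 <= (2*a1-a2)*(2*a1-a2)*(a3-a4)) by (repeat apply Rmult_le_pos; lra).
  assert (0 <= (2*a1-a2)*(2*a2-a1-a3)*(2*a2-a1-a3)) by (repeat apply Rmult_le_pos; lra).
  assert (0 <= (2*a1-a2)*(2*a2-a1-a3)*(2*a3-a2-a4)) by (repeat apply Rmult_le_pos; lra).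
  assert (0 <= (2*a1-a2)*(2*a2-a1-a3)*(2*a4-a3)) by (repeat apply Rmult_le_pos; lra).
  assert (0 <= (2*a1-a2)*(2*a2-a1-a3)*(a3-a1)) by (repeat apply Rmult_le_pos; lra).
  assert (0 <= (2*a1-a2)*(2*a2-a1-a3)*(a3-a2)) by (repeat apply Rmult_le_pos; lra).
  assert (0 <= (2*a1-a2)*(2*a2-a1-a3)*(a3-a4)) by (repeat apply Rmult_le_pos; lra).
  assert (0 <= (2*a1-a2)*(2*a3-a2-a4)*(2*a3-a2-a4)) by (repeat apply Rmult_le_pos; lra).
  assert (0 <= (2*a1-a2)*(2*a3-a2-a4)*(2*a4-a3)) by (repeat apply Rmult_le_pos; lra).
  assert (0 <= (2*a1-a2)*(2*a3-a2-a4)*(a3-a1)) by (repeat apply Rmult_le_pos; lra).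
  assert (0 <= (2*a1-a2)*(2*a3-a2-a4)*(a3-a2)) by (repeat apply Rmult_le_pos; lra).
  assert (0 <= (2*a1-a2)*(2*a3-a2-a4)*(a3-a4)) by (repeat apply Rmult_le_pos; lra).
  assert (0 <= (2*a1-a2)*(2*a4-a3)*(2*a4-a3)) by (repeat apply Rmult_le_pos; lra).
  assert (0 <= (2*a1-a2)*(2*a4-a3)*(a3-a1)) by (repeat apply Rmult_le_pos; lra).
  assert (0 <= (2*a1-a2)*(2*a4-a3)*(a3-a2)) by (repeat apply Rmult_le_pos; lra).
  assert (0 <= (2*a1-a2)*(2*a4-a3)*(a3-a4)) by (repeat apply Rmult_le_pos; lra).
  assert (0 <= (2*a1-a2)*(a3-a1)*(a3-a1)) by (repeat apply Rmult_le_pos; lra).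
  assert (0 <= (2*a1-a2)*(a3-a1)*(a3-a2)) by (repeat apply Rmult_le_pos; lra).
  assert (0 <= (2*a1-a2)*(a3-a1)*(a3-a4)) by (repeat apply Rmult_le_pos; lra).
  assert (0 <= (2*a1-a2)*(a3-a2)*(a3-a2)) by (repeat apply Rmult_le_pos; lra).
  assert (0 <= (2*a1-a2)*(a3-a2)*(a3-a4)) by (repeat apply Rmult_le_pos; lra).
  assert (0 <= (2*a1-a2)*(a3-a4)*(a3-a4)) by (repeat apply Rmult_le_pos; lra).
  assert (0 <= (2*a2-a1-a3)*(2*a2-a1-a3)*(2*a2-a1-a3)) by (repeat apply Rmult_le_pos; lra).
  assert (0 <= (2*a2-a1-a3)*(2*a2-a1-a3)*(2*a3-a2-a4)) by (repeat apply Rmult_le_pos; lra).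
  assert (0 <= (2*a2-a1-a3)*(2*a2-a1-a3)*(2*a4-a3)) by (repeat apply Rmult_le_pos; lra).
  assert (0 <= (2*a2-a1-a3)*(2*a2-a1-a3)*(a3-a1)) by (repeat apply Rmult_le_pos; lra).
  assert (0 <= (2*a2-a1-a3)*(2*a2-a1-a3)*(a3-a2)) by (repeat apply Rmult_le_pos; lra).
  assert (0 <= (2*a2-a1-a3)*(2*a2-a1-a3)*(a3-a4)) by (repeat apply Rmult_le_pos; lra).
  assert (0 <= (2*a2-a1-a3)*(2*a3-a2-a4)*(2*a3-a2-a4)) by (repeat apply Rmult_le_pos; lra).
  assert (0 <= (2*a2-a1-a3)*(2*a3-a2-a4)*(2*a4-a3)) by (repeat apply Rmult_le_pos; lra).
  assert (0 <= (2*a2-a1-a3)*(2*a3-a2-a4)*(a3-a1)) by (repeat apply Rmult_le_pos; lra).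
  assert (0 <= (2*a2-a1-a3)*(2*a3-a2-a4)*(a3-a2)) by (repeat apply Rmult_le_pos; lra).
  assert (0 <= (2*a2-a1-a3)*(2*a3-a2-a4)*(a3-a4)) by (repeat apply Rmult_le_pos; lra).
  assert (0 <= (2*a2-a1-a3)*(2*a4-a3)*(2*a4-a3)) by (repeat apply Rmult_le_pos; lra).
  assert (0 <= (2*a2-a1-a3)*(2*a4-a3)*(a3-a1)) by (repeat apply Rmult_le_pos; lra).
  assert (0 <= (2*a2-a1-a3)*(2*a4-a3)*(a3-a2)) by (repeat apply Rmult_le_pos; lra).
  assert (0 <= (2*a2-a1-a3)*(2*a4-a3)*(a3-a4)) by (repeat apply Rmult_le_pos; lra).
  assert (0 <= (2*a2-a1-a3)*(a3-a1)*(a3-a1)) by (repeat apply Rmult_le_pos; lra).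
  assert (0 <= (2*a2-a1-a3)*(a3-a1)*(a3-a2)) by (repeat apply Rmult_le_pos; lra).
  assert (0 <= (2*a2-a1-a3)*(a3-a1)*(a3-a4)) by (repeat apply Rmult_le_pos; lra).
  assert (0 <= (2*a2-a1-a3)*(a3-a2)*(a3-a2)) by (repeat apply Rmult_le_pos; lra).
  assert (0 <= (2*a2-a1-a3)*(a3-a2)*(a3-a4)) by (repeat apply Rmult_le_pos; lra).
  assert (0 <= (2*a2-a1-a3)*(a3-a4)*(a3-a4)) by (repeat apply Rmult_le_pos; lra).
  assert (0 <= (2*a3-a2-a4)*(2*a3-a2-a4)*(2*a3-a2-a4)) by (repeat apply Rmult_le_pos; lra).
  assert (0 <= (2*a3-a2-a4)*(2*a3-a2-a4)*(2*a4-a3)) by (repeat apply Rmult_le_pos; lra).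
  assert (0 <= (2*a3-a2-a4)*(2*a3-a2-a4)*(a3-a1)) by (repeat apply Rmult_le_pos; lra).
  assert (0 <= (2*a3-a2-a4)*(2*a3-a2-a4)*(a3-a2)) by (repeat apply Rmult_le_pos; lra).
  assert (0 <= (2*a3-a2-a4)*(2*a3-a2-a4)*(a3-a4)) by (repeat apply Rmult_le_pos; lra).
  assert (0 <= (2*a3-a2-a4)*(2*a4-a3)*(2*a4-a3)) by (repeat apply Rmult_le_pos; lra).
  assert (0 <= (2*a3-a2-a4)*(2*a4-a3)*(a3-a1)) by (repeat apply Rmult_le_pos; lra).
  assert (0 <= (2*a3-a2-a4)*(2*a4-a3)*(a3-a2)) by (repeat apply Rmult_le_pos; lra).
  assert (0 <= (2*a3-a2-a4)*(2*a4-a3)*(a3-a4)) by (repeat apply Rmult_le_pos; lra).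
  assert (0 <= (2*a3-a2-a4)*(a3-a1)*(a3-a1)) by (repeat apply Rmult_le_pos; lra).
  assert (0 <= (2*a3-a2-a4)*(a3-a1)*(a3-a2)) by (repeat apply Rmult_le_pos; lra).
  assert (0 <= (2*a3-a2-a4)*(a3-a1)*(a3-a4)) by (repeat apply Rmult_le_pos; lra).
  assert (0 <= (2*a3-a2-a4)*(a3-a2)*(a3-a2)) by (repeat apply Rmult_le_pos; lra).
  assert (0 <= (2*a3-a2-a4)*(a3-a2)*(a3-a4)) by (repeat apply Rmult_le_pos; lra).
  assert (0 <= (2*a3-a2-a4)*(a3-a4)*(a3-a4)) by (repeat apply Rmult_le_pos; lra).
  assert (0 <= (2*a4-a3)*(2*a4-a3)*(2*a4-a3)) by (repeat apply Rmult_le_pos; lra).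
  assert (0 <= (2*a4-a3)*(2*a4-a3)*(a3-a1)) by (repeat apply Rmult_le_pos; lra).
  assert (0 <= (2*a4-a3)*(2*a4-a3)*(a3-a2)) by (repeat apply Rmult_le_pos; lra).
  assert (0 <= (2*a4-a3)*(2*a4-a3)*(a3-a4)) by (repeat apply Rmult_le_pos; lra).
  assert (0 <= (2*a4-a3)*(a3-a1)*(a3-a1)) by (repeat apply Rmult_le_pos; lra).
  assert (0 <= (2*a4-a3)*(a3-a1)*(a3-a2)) by (repeat apply Rmult_le_pos; lra).
  assert (0 <= (2*a4-a3)*(a3-a1)*(a3-a4)) by (repeat apply Rmult_le_pos; lra).
  assert (0 <= (2*a4-a3)*(a3-a2)*(a3-a2)) by (repeat apply Rmult_le_pos; lra).
  assert (0 <= (2*a4-a3)*(a3-a2)*(a3-a4)) by (repeat apply Rmult_le_pos; lra).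
  assert (0 <= (2*a4-a3)*(a3-a4)*(a3-a4)) by (repeat apply Rmult_le_pos; lra).
  assert (0 <= (a3-a1)*(a3-a1)*(a3-a1)) by (repeat apply Rmult_le_pos; lra).
  assert (0 <= (a3-a1)*(a3-a1)*(a3-a2)) by (repeat apply Rmult_le_pos; lra).
  assert (0 <= (a3-a1)*(a3-a1)*(a3-a4)) by (repeat apply Rmult_le_pos; lra).
  assert (0 <= (a3-a1)*(a3-a2)*(a3-a2)) by (repeat apply Rmult_le_pos; lra).
  assert (0 <= (a3-a1)*(a3-a2)*(a3-a4)) by (repeat apply Rmult_le_pos; lra).
  assert (0 <= (a3-a1)*(a3-a4)*(a3-a4)) by (repeat apply Rmult_le_pos; lra).
  assert (0 <= (a3-a2)*(a3-a2)*(a3-a2)) by (repeat apply Rmult_le_pos; lra).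
  assert (0 <= (a3-a2)*(a3-a2)*(a3-a4)) by (repeat apply Rmult_le_pos; lra).
  assert (0 <= (a3-a2)*(a3-a4)*(a3-a4)) by (repeat apply Rmult_le_pos; lra).
  assert (0 <= (a3-a4)*(a3-a4)*(a3-a4)) by (repeat apply Rmult_le_pos; lra).
  assert (0 < a3*a3*a3) by (repeat apply Rmult_lt_0_compat; lra).
  lra. Qed.
Lemma case4 a1 a2 a3 a4 c : c = 3*(a1+a2+a3+a4)/8 -> 0<a1 -> 0<a2 -> 0<a3 -> 0<a4 -> 2*a1 >= a2 -> 2*a2>=a1+a3 -> 2*a3>=a2+a4 -> 2*a4>=a3 ->
 a1 <= a4 -> a2 <= a4 -> a3 <= a4 ->
  0 < (c - a1) /\ 0 < (c - a2) /\ 0 < (c - a3) /\ (c - a4)*((c - a1)*(c - a2)+(c - a1)*(c - a3)+(c - a2)*(c - a3)) + (c - a1)*(c - a2)*(c - a3) > 0.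
Proof. intros Hc. subst c. intros.
  split; [lra|split;[lra|split;[lra|]]].
  assert (0 <= (2*a1-a2)*(2*a1-a2)*(2*a1-a2)) by (repeat apply Rmult_le_pos; lra).
  assert (0 <= (2*a1-a2)*(2*a1-a2)*(2*a2-a1-a3)) by (repeat apply Rmult_le_pos; lra).
  assert (0 <= (2*a1-a2)*(2*a1-a2)*(2*a3-a2-a4)) by (repeat apply Rmult_le_pos; lra).
  assert (0 <= (2*a1-a2)*(2*a1-a2)*(2*a4-a3)) by (repeat apply Rmult_le_pos; lra).
  assert (0 <= (2*a1-a2)*(2*a1-a2)*(a4-a1)) by (repeat apply Rmult_le_pos; lra).
  assert (0 <= (2*a1-a2)*(2*a1-a2)*(a4-a2)) by (repeat apply Rmult_le_pos; lra).
  assert (0 <= (2*a1-a2)*(2*a1-a2)*(a4-a3)) by (repeat apply Rmult_le_pos; lra).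
  assert (0 <= (2*a1-a2)*(2*a2-a1-a3)*(2*a2-a1-a3)) by (repeat apply Rmult_le_pos; lra).
  assert (0 <= (2*a1-a2)*(2*a2-a1-a3)*(2*a3-a2-a4)) by (repeat apply Rmult_le_pos; lra).
  assert (0 <= (2*a1-a2)*(2*a2-a1-a3)*(2*a4-a3)) by (repeat apply Rmult_le_pos; lra).
  assert (0 <= (2*a1-a2)*(2*a2-a1-a3)*(a4-a1)) by (repeat apply Rmult_le_pos; lra).
  assert (0 <= (2*a1-a2)*(2*a2-a1-a3)*(a4-a2)) by (repeat apply Rmult_le_pos; lra).
  assert (0 <= (2*a1-a2)*(2*a2-a1-a3)*(a4-a3)) by (repeat apply Rmult_le_pos; lra).
  assert (0 <= (2*a1-a2)*(2*a3-a2-a4)*(2*a3-a2-a4)) by (repeat apply Rmult_le_pos; lra).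
  assert (0 <= (2*a1-a2)*(2*a3-a2-a4)*(2*a4-a3)) by (repeat apply Rmult_le_pos; lra).
  assert (0 <= (2*a1-a2)*(2*a3-a2-a4)*(a4-a1)) by (repeat apply Rmult_le_pos; lra).
  assert (0 <= (2*a1-a2)*(2*a3-a2-a4)*(a4-a2)) by (repeat apply Rmult_le_pos; lra).
  assert (0 <= (2*a1-a2)*(2*a3-a2-a4)*(a4-a3)) by (repeat apply Rmult_le_pos; lra).
  assert (0 <= (2*a1-a2)*(2*a4-a3)*(2*a4-a3)) by (repeat apply Rmult_le_pos; lra).
  assert (0 <= (2*a1-a2)*(2*a4-a3)*(a4-a1)) by (repeat apply Rmult_le_pos; lra).
  assert (0 <= (2*a1-a2)*(2*a4-a3)*(a4-a2)) by (repeat apply Rmult_le_pos; lra).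
  assert (0 <= (2*a1-a2)*(2*a4-a3)*(a4-a3)) by (repeat apply Rmult_le_pos; lra).
  assert (0 <= (2*a1-a2)*(a4-a1)*(a4-a1)) by (repeat apply Rmult_le_pos; lra).
  assert (0 <= (2*a1-a2)*(a4-a1)*(a4-a2)) by (repeat apply Rmult_le_pos; lra).
  assert (0 <= (2*a1-a2)*(a4-a1)*(a4-a3)) by (repeat apply Rmult_le_pos; lra).
  assert (0 <= (2*a1-a2)*(a4-a2)*(a4-a2)) by (repeat apply Rmult_le_pos; lra).
  assert (0 <= (2*a1-a2)*(a4-a2)*(a4-a3)) by (repeat apply Rmult_le_pos; lra).
  assert (0 <= (2*a1-a2)*(a4-a3)*(a4-a3)) by (repeat apply Rmult_le_pos; lra).
  assert (0 <= (2*a2-a1-a3)*(2*a2-a1-a3)*(2*a2-a1-a3)) by (repeat apply Rmult_le_pos; lra).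
  assert (0 <= (2*a2-a1-a3)*(2*a2-a1-a3)*(2*a3-a2-a4)) by (repeat apply Rmult_le_pos; lra).
  assert (0 <= (2*a2-a1-a3)*(2*a2-a1-a3)*(2*a4-a3)) by (repeat apply Rmult_le_pos; lra).
  assert (0 <= (2*a2-a1-a3)*(2*a2-a1-a3)*(a4-a1)) by (repeat apply Rmult_le_pos; lra).
  assert (0 <= (2*a2-a1-a3)*(2*a2-a1-a3)*(a4-a2)) by (repeat apply Rmult_le_pos; lra).
  assert (0 <= (2*a2-a1-a3)*(2*a2-a1-a3)*(a4-a3)) by (repeat apply Rmult_le_pos; lra).
  assert (0 <= (2*a2-a1-a3)*(2*a3-a2-a4)*(2*a3-a2-a4)) by (repeat apply Rmult_le_pos; lra).
  assert (0 <= (2*a2-a1-a3)*(2*a3-a2-a4)*(2*a4-a3)) by (repeat apply Rmult_le_pos; lra).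
  assert (0 <= (2*a2-a1-a3)*(2*a3-a2-a4)*(a4-a1)) by (repeat apply Rmult_le_pos; lra).
  assert (0 <= (2*a2-a1-a3)*(2*a3-a2-a4)*(a4-a2)) by (repeat apply Rmult_le_pos; lra).
  assert (0 <= (2*a2-a1-a3)*(2*a3-a2-a4)*(a4-a3)) by (repeat apply Rmult_le_pos; lra).
  assert (0 <= (2*a2-a1-a3)*(2*a4-a3)*(2*a4-a3)) by (repeat apply Rmult_le_pos; lra).
  assert (0 <= (2*a2-a1-a3)*(2*a4-a3)*(a4-a1)) by (repeat apply Rmult_le_pos; lra).
  assert (0 <= (2*a2-a1-a3)*(2*a4-a3)*(a4-a2)) by (repeat apply Rmult_le_pos; lra).
  assert (0 <= (2*a2-a1-a3)*(2*a4-a3)*(a4-a3)) by (repeat apply Rmult_le_pos; lra).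
  assert (0 <= (2*a2-a1-a3)*(a4-a1)*(a4-a1)) by (repeat apply Rmult_le_pos; lra).
  assert (0 <= (2*a2-a1-a3)*(a4-a1)*(a4-a2)) by (repeat apply Rmult_le_pos; lra).
  assert (0 <= (2*a2-a1-a3)*(a4-a1)*(a4-a3)) by (repeat apply Rmult_le_pos; lra).
  assert (0 <= (2*a2-a1-a3)*(a4-a2)*(a4-a2)) by (repeat apply Rmult_le_pos; lra).
  assert (0 <= (2*a2-a1-a3)*(a4-a2)*(a4-a3)) by (repeat apply Rmult_le_pos; lra).
  assert (0 <= (2*a2-a1-a3)*(a4-a3)*(a4-a3)) by (repeat apply Rmult_le_pos; lra).
  assert (0 <= (2*a3-a2-a4)*(2*a3-a2-a4)*(2*a3-a2-a4)) by (repeat apply Rmult_le_pos; lra).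
  assert (0 <= (2*a3-a2-a4)*(2*a3-a2-a4)*(2*a4-a3)) by (repeat apply Rmult_le_pos; lra).
  assert (0 <= (2*a3-a2-a4)*(2*a3-a2-a4)*(a4-a1)) by (repeat apply Rmult_le_pos; lra).
  assert (0 <= (2*a3-a2-a4)*(2*a3-a2-a4)*(a4-a2)) by (repeat apply Rmult_le_pos; lra).
  assert (0 <= (2*a3-a2-a4)*(2*a3-a2-a4)*(a4-a3)) by (repeat apply Rmult_le_pos; lra).
  assert (0 <= (2*a3-a2-a4)*(2*a4-a3)*(2*a4-a3)) by (repeat apply Rmult_le_pos; lra).
  assert (0 <= (2*a3-a2-a4)*(2*a4-a3)*(a4-a1)) by (repeat apply Rmult_le_pos; lra).
  assert (0 <= (2*a3-a2-a4)*(2*a4-a3)*(a4-a2)) by (repeat apply Rmult_le_pos; lra).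
  assert (0 <= (2*a3-a2-a4)*(2*a4-a3)*(a4-a3)) by (repeat apply Rmult_le_pos; lra).
  assert (0 <= (2*a3-a2-a4)*(a4-a1)*(a4-a1)) by (repeat apply Rmult_le_pos; lra).
  assert (0 <= (2*a3-a2-a4)*(a4-a1)*(a4-a2)) by (repeat apply Rmult_le_pos; lra).
  assert (0 <= (2*a3-a2-a4)*(a4-a1)*(a4-a3)) by (repeat apply Rmult_le_pos; lra).
  assert (0 <= (2*a3-a2-a4)*(a4-a2)*(a4-a2)) by (repeat apply Rmult_le_pos; lra).
  assert (0 <= (2*a3-a2-a4)*(a4-a2)*(a4-a3)) by (repeat apply Rmult_le_pos; lra).
  assert (0 <= (2*a3-a2-a4)*(a4-a3)*(a4-a3)) by (repeat apply Rmult_le_pos; lra).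
  assert (0 <= (2*a4-a3)*(2*a4-a3)*(2*a4-a3)) by (repeat apply Rmult_le_pos; lra).
  assert (0 <= (2*a4-a3)*(2*a4-a3)*(a4-a1)) by (repeat apply Rmult_le_pos; lra).
  assert (0 <= (2*a4-a3)*(2*a4-a3)*(a4-a2)) by (repeat apply Rmult_le_pos; lra).
  assert (0 <= (2*a4-a3)*(2*a4-a3)*(a4-a3)) by (repeat apply Rmult_le_pos; lra).
  assert (0 <= (2*a4-a3)*(a4-a1)*(a4-a1)) by (repeat apply Rmult_le_pos; lra).
  assert (0 <= (2*a4-a3)*(a4-a1)*(a4-a2)) by (repeat apply Rmult_le_pos; lra).
  assert (0 <= (2*a4-a3)*(a4-a1)*(a4-a3)) by (repeat apply Rmult_le_pos; lra).
  assert (0 <= (2*a4-a3)*(a4-a2)*(a4-a2)) by (repeat apply Rmult_le_pos; lra).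
  assert (0 <= (2*a4-a3)*(a4-a2)*(a4-a3)) by (repeat apply Rmult_le_pos; lra).
  assert (0 <= (2*a4-a3)*(a4-a3)*(a4-a3)) by (repeat apply Rmult_le_pos; lra).
  assert (0 <= (a4-a1)*(a4-a1)*(a4-a1)) by (repeat apply Rmult_le_pos; lra).
  assert (0 <= (a4-a1)*(a4-a1)*(a4-a2)) by (repeat apply Rmult_le_pos; lra).
  assert (0 <= (a4-a1)*(a4-a1)*(a4-a3)) by (repeat apply Rmult_le_pos; lra).
  assert (0 <= (a4-a1)*(a4-a2)*(a4-a2)) by (repeat apply Rmult_le_pos; lra).
  assert (0 <= (a4-a1)*(a4-a2)*(a4-a3)) by (repeat apply Rmult_le_pos; lra).
  assert (0 <= (a4-a1)*(a4-a3)*(a4-a3)) by (repeat apply Rmult_le_pos; lra).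
  assert (0 <= (a4-a2)*(a4-a2)*(a4-a2)) by (repeat apply Rmult_le_pos; lra).
  assert (0 <= (a4-a2)*(a4-a2)*(a4-a3)) by (repeat apply Rmult_le_pos; lra).
  assert (0 <= (a4-a2)*(a4-a3)*(a4-a3)) by (repeat apply Rmult_le_pos; lra).
  assert (0 <= (a4-a3)*(a4-a3)*(a4-a3)) by (repeat apply Rmult_le_pos; lra).
  assert (0 < a4*a4*a4) by (repeat apply Rmult_lt_0_compat; lra).
  lra. Qed.

Lemma helper3 d x y z : 0<x -> 0<y -> 0<z -> d*(x*y+x*z+y*z) + x*y*z > 0 -> 0 < 1 + d*(/x+/y+/z).
Proof. intros. assert (E : 1 + d*(/x+/y+/z) = (d*(x*y+x*z+y*z) + x*y*z) / (x*y*z)) by (field; lra).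
  rewrite E. apply Rdiv_lt_0_compat. lra. repeat apply Rmult_lt_0_compat; lra. Qed.

Lemma n4_key (a : nat -> R) k c : c = 3 * sum1 4 a / 8 ->
  0 < a 1%nat -> 0 < a 2%nat -> 0 < a 3%nat -> 0 < a 4%nat ->
  2 * a 1%nat >= a 2%nat -> 2 * a 2%nat >= a 1%nat + a 3%nat -> 2 * a 3%nat >= a 2%nat + a 4%nat -> 2 * a 4%nat >= a 3%nat ->
  (1 <= k <= 4)%nat -> (forall i, (1 <= i <= 4)%nat -> a i <= a k) ->
  (forall i, (1 <= i <= 4)%nat -> i <> k -> 0 < c - a i) /\ 0 < 1 + (c - a k) * sum1 4 (fun i => if Nat.eqb i k then 0 else / (c - a i)).
Proof. intros Hc H1 H2 H3 H4 C1 C2 C3 C4 Hk Hmax.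
  assert (Hc' : c = 3 * (a 1%nat + a 2%nat + a 3%nat + a 4%nat) / 8) by (rewrite Hc; unfold sum1; simpl; lra).
  assert (M1 := Hmax 1%nat ltac:(lia)). assert (M2 := Hmax 2%nat ltac:(lia)).
  assert (M3 := Hmax 3%nat ltac:(lia)). assert (M4 := Hmax 4%nat ltac:(lia)).
  destruct k as [|[|[|[|[|k]]]]]; try lia.
  - destruct (case1 _ _ _ _ c Hc' H1 H2 H3 H4 C1 C2 C3 C4 M2 M3 M4) as [P1 [P2 [P3 P4]]].
    split. { intros i Hi Hik. destruct i as [|[|[|[|[|i]]]]]; try lia; auto. }
    unfold sum1; simpl. rewrite ?Rplus_0_l, ?Rplus_0_r. apply helper3; auto.
  - destruct (case2 _ _ _ _ c Hc' H1 H2 H3 H4 C1 C2 C3 C4 M1 M3 M4) as [P1 [P2 [P3 P4]]].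
    split. { intros i Hi Hik. destruct i as [|[|[|[|[|i]]]]]; try lia; auto. }
    unfold sum1; simpl. rewrite ?Rplus_0_l, ?Rplus_0_r. apply helper3; auto.
  - destruct (case3 _ _ _ _ c Hc' H1 H2 H3 H4 C1 C2 C3 C4 M1 M2 M4) as [P1 [P2 [P3 P4]]].
    split. { intros i Hi Hik. destruct i as [|[|[|[|[|i]]]]]; try lia; auto. }
    unfold sum1; simpl. rewrite ?Rplus_0_l, ?Rplus_0_r. apply helper3; auto.
  - destruct (case4 _ _ _ _ c Hc' H1 H2 H3 H4 C1 C2 C3 C4 M1 M2 M3) as [P1 [P2 [P3 P4]]].
    split. { intros i Hi Hik. destruct i as [|[|[|[|[|i]]]]]; try lia; auto. }
    unfold sum1; simpl. rewrite ?Rplus_0_l, ?Rplus_0_r. apply helper3; auto.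
Qed.

Lemma cont_inv_shift c x : x - c <> 0 -> continuity_pt (fun y => / (y - c)) x.
Proof. intros H. apply (continuity_pt_inv (fun y => y - c)); [|exact H].
  apply (continuity_pt_minus (fun y => y) (fun _ => c)).
  - apply derivable_continuous_pt, derivable_pt_id.
  - apply continuity_pt_const. intros u v; reflexivity. Qed.

Lemma den_pos n y : admissible n y -> 0 < sum1 n (fun i => y i ^ 2).
Proof. intros [[j [Hj Hy]] _]. apply sum1_pos. intros; apply pow2_ge_0.
  exists j; split; auto. apply pow2_gt_0; auto. Qed.

Lemma bound_from_form n a lam y :
  0 <= sum1 n (fun i => (lam - a i) * y i ^ 2) ->
  sum1 n (fun i => a i * y i ^ 2) <= lam * sum1 n (fun i => y i ^ 2).
Proof. intros H. rewrite (sum1_ext n _ (fun i => lam * y i ^ 2 - a i * y i ^ 2)) in H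
  by (intros; ring). rewrite sum1_minus, sum1_scal in H. lra. Qed.

Lemma other_index n k : (2 <= n)%nat -> (1 <= k <= n)%nat ->
  exists i, (1 <= i <= n)%nat /\ negb (Nat.eqb i k) = true.
Proof. intros Hn Hk. exists (if Nat.eqb k 1 then 2%nat else 1%nat).
  destruct (Nat.eqb_spec k 1); (split; [lia|]).
  - destruct (Nat.eqb_spec 2 k); [lia|reflexivity].
  - destruct (Nat.eqb_spec 1 k); [lia|reflexivity]. Qed.

Lemma exists_max n (a : nat -> R) : (2 <= n)%nat ->
  exists lam,
   (exists x, admissible n x /\ sum1 n (fun i => a i * x i ^ 2) = lam * sum1 n (fun i => x i ^ 2)) /\
   (forall y, admissible n y -> sum1 n (fun i => a i * y i ^ 2) <= lam * sum1 n (fun i => y i ^ 2)).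
Proof. intros Hn.
  destruct (argmax_gen a (fun _ => true) n) as [k [Hk [_ Hkmax]]].
  { exists 1%nat; split; [lia|reflexivity]. }
  destruct (argmax_gen a (fun i => negb (Nat.eqb i k)) n (other_index n k Hn Hk))
    as [j [Hj [Hjk Hjmax]]].
  apply negb_true_iff in Hjk. apply Nat.eqb_neq in Hjk.
  assert (HkA : forall i, (1 <= i <= n)%nat -> a i <= a k) by (intros; apply Hkmax; auto).
  assert (HjB : forall i, (1 <= i <= n)%nat -> i <> k -> a i <= a j).
  { intros i Hi Hik. apply Hjmax; auto. apply negb_true_iff, Nat.eqb_neq; auto. }
  set (A := a k) in *. set (B := a j) in *.
  assert (HBA : B <= A) by (apply HkA; auto).
  destruct (Rle_lt_or_eq_dec _ _ HBA) as [HBlt|HBeq].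
  2:{
    exists A. split.
    - exists (fun i => indic k i - indic j i). split.
      + split.
        * exists k. split; auto. unfold indic. rewrite Nat.eqb_refl.
          destruct (Nat.eqb_spec k j); [lia|]. lra.
        * rewrite sum1_minus, !sum1_ind by auto. lra.
      + rewrite <- sum1_scal. apply sum1_ext. intros i Hi. unfold indic.
        destruct (Nat.eqb_spec i k); destruct (Nat.eqb_spec i j); subst; try lia; unfold A, B in *; try ring.
        rewrite HBeq. ring.
    - intros y Hy. apply bound_from_form. apply sum1_nonneg. intros i Hi.
      apply Rmult_le_pos; [|apply pow2_ge_0]. assert (a i <= A) by auto. lra. }
  (* strict case: IVT *)
  set (N := INR n).
  assert (HN : 2 <= N) by (unfold N; replace 2 with (INR 2) by (simpl; lra); apply le_INR; auto).
  set (G := A - B).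
  assert (HG : 0 < G) by (unfold G; lra).
  set (l1 := B + G / (2 * N)). set (l2 := A - G / (2 * N)).
  assert (Hq : 0 < G / (2 * N)) by (apply Rdiv_lt_0_compat; lra).
  assert (Hq2 : G / (2 * N) < G / 2) by (apply Rmult_lt_compat_l; [lra|]; apply Rinv_lt_contravar; lra).
  assert (Hl12 : l1 < l2) by (unfold l1, l2, G in *; lra).
  set (h := fun lam => sum1 n (fun i => / (lam - a i))).
  assert (Hh1 : 0 < h l1).
  { assert (h l1 >= sum1 n (fun i => / (l1 - B) * indic j i + / (l1 - A) * indic k i)).
    { apply Rle_ge, sum1_le. intros i Hi. unfold indic.
      destruct (Nat.eqb_spec i j); destruct (Nat.eqb_spec i k); subst; try lia.
      - unfold B. lra.
      - unfold A. lra.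
      - assert (a i <= B) by auto. assert (0 < / (l1 - a i)) by (apply Rinv_0_lt_compat; unfold l1 in *; lra). lra. }
    rewrite sum1_plus, !sum1_scal, !sum1_ind in H by auto.
    assert (E : / (l1 - B) * 1 + / (l1 - A) * 1 = (2 * N / G) * ((2 * N - 2) / (2 * N - 1))).
    { unfold l1, G. field. repeat split; try lra. intro Hc; assert (Hc2 : (A - B) * (2*N - 1) = 0) by lra; apply Rmult_integral in Hc2; destruct Hc2; lra. }
    rewrite E in H. assert (0 < (2 * N / G) * ((2 * N - 2) / (2 * N - 1))).
    { apply Rmult_lt_0_compat; apply Rdiv_lt_0_compat; lra. } lra. }
  assert (Hh2 : h l2 < 0).
  { assert (h l2 <= sum1 n (fun i => / (l2 - B) + (/ (l2 - A) - / (l2 - B)) * indic k i)).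
    { apply sum1_le. intros i Hi. unfold indic.
      destruct (Nat.eqb_spec i k); subst.
      - unfold A. lra.
      - assert (a i <= B) by auto. rewrite Rmult_0_r, Rplus_0_r.
        apply Rinv_le_contravar; unfold l2, G in *; lra. }
    rewrite sum1_plus, sum1_scal, sum1_const, sum1_ind in H by auto.
    assert (E : N * / (l2 - B) + (/ (l2 - A) - / (l2 - B)) * 1 = (2 * N / G) * ((N - 1) / (2 * N - 1) - 1)).
    { unfold l2, G. field. repeat split; try lra. intro Hc; assert (Hc2 : (A - B) * (2*N - 1) = 0) by lra; apply Rmult_integral in Hc2; destruct Hc2; lra. }
    fold N in H. rewrite E in H. assert (0 < (2 * N / G) * (1 - (N - 1) / (2 * N - 1))).
    { apply Rmult_lt_0_compat. apply Rdiv_lt_0_compat; lra.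
      assert ((N - 1) / (2 * N - 1) < 1) by (unfold Rdiv; apply (Rmult_lt_reg_r (2*N-1)); [lra|]; rewrite Rmult_assoc, Rinv_l by lra; lra). lra. }
    assert ((2 * N / G) * ((N - 1) / (2 * N - 1) - 1) = - ((2 * N / G) * (1 - (N - 1) / (2 * N - 1)))) by ring.
    lra. }
  destruct (IVT_interv (fun lam => - h lam) l1 l2) as [z [Hz Hhz]].
  { intros lam Hlam. apply continuity_pt_opp. unfold h, sum1.
    apply (sumR_cont n (fun i y => / (y - a (S i)))). intros i Hi.
    apply cont_inv_shift. destruct (Nat.eq_dec (S i) k) as [E|E].
    - rewrite E. unfold l2 in *. fold A. lra.
    - assert (a (S i) <= B) by (apply HjB; lia). unfold l1 in *. lra. }
  { exact Hl12. } { lra. } { lra. }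
  set (d := fun i => z - a i).
  assert (Hdpos : forall i, (1 <= i <= n)%nat -> i <> k -> 0 < d i).
  { intros i Hi Hik. assert (a i <= B) by auto. unfold d, l1 in *. lra. }
  assert (Hdk : d k < 0) by (unfold d, l2 in *; fold A; lra).
  assert (Hd0 : forall i, (1 <= i <= n)%nat -> d i <> 0).
  { intros i Hi. destruct (Nat.eq_dec i k). subst; lra. assert (0 < d i) by auto. lra. }
  assert (Hhz0 : sum1 n (fun i => / d i) = 0) by (unfold h in Hhz; unfold d; lra).
  exists z. split.
  - exists (fun i => / d i). split.
    + split. exists k. split; auto. apply Rinv_neq_0_compat; lra. exact Hhz0.
    + rewrite (sum1_ext n _ (fun i => z * (/ d i) ^ 2 - / d i)).
      rewrite sum1_minus, sum1_scal, Hhz0. lra.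
      intros i Hi. assert (d i <> 0) by auto. unfold d in *. field. auto.
  - intros y Hy. apply bound_from_form. apply (formL_nonneg n k d y Hn Hk Hdpos).
    apply Hy.
    rewrite (sum1_split n k) in Hhz0 by auto.
    assert (E : sum1 n (fun i => if Nat.eqb i k then 0 else / d i) = - / d k) by lra.
    rewrite E. assert (d k * - / d k = -1) by (field; lra). lra.
Qed.

Lemma tent_total n (a : nat -> R) k :
  a 0%nat = 0 -> a (n+1)%nat = 0 ->
  (forall i, (i+2 <= n+1)%nat -> 2 * a (S i) >= a i + a (S (S i))) ->
  (1 <= k <= n)%nat ->
  sum1 n a >= a k * (INR n + 1) / 2.
Proof. intros Ha0 Han Hc Hk.
  assert (H1 := tentsum a (n+1) Ha0 Hc k k ltac:(lia) (le_n k)).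
  set (b := fun i => a (n + 1 - i)%nat).
  assert (Hb0 : b 0%nat = 0) by (unfold b; rewrite Nat.sub_0_r; exact Han).
  assert (Hbc : forall i, (i+2 <= n+1)%nat -> 2 * b (S i) >= b i + b (S (S i))).
  { intros i Hi. unfold b.
    replace (n + 1 - S i)%nat with (S (n-1-i)) by lia.
    replace (n + 1 - i)%nat with (S (S (n-1-i))) by lia.
    replace (n + 1 - S (S i))%nat with (n-1-i)%nat by lia.
    assert (H := Hc (n-1-i)%nat ltac:(lia)). lra. }
  assert (H2 := tentsum b (n+1) Hb0 Hbc (n+1-k) (n-k) ltac:(lia) ltac:(lia)).
  replace (b (n+1-k)%nat) with (a k) in H2 by (unfold b; f_equal; lia).
  replace (n + 1 - k)%nat with (S (n-k)) in H2 by lia.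
  assert (Hsplit : sum1 n a = sumR k (fun i => a (S i)) + sumR (n-k) (fun i => b (S i))).
  { unfold sum1. replace n with (k + (n-k))%nat at 1 by lia. rewrite sumR_app. f_equal.
    rewrite sumR_rev. apply sumR_ext. intros i Hi. unfold b. f_equal. lia. }
  rewrite Hsplit.
  rewrite !S_INR in *. rewrite minus_INR in * by lia.
  assert (HK : 1 <= INR k) by (replace 1 with (INR 1) by reflexivity; apply le_INR; lia).
  assert (HNK : INR k <= INR n) by (apply le_INR; lia).
  set (K := INR k) in *. set (N := INR n) in *.
  set (s1 := sumR k (fun i => a (S i))) in *. set (s2 := sumR (n-k) (fun i => b (S i))) in *.
  assert (E1 : s1 >= a k * (K + 1) / 2).
  { apply Rle_ge. apply (Rmult_le_reg_l (2*K)); [lra|].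
    assert (2 * K * (a k * (K + 1) / 2) = a k * K * (K+1)) by (field). lra. }
  assert (E2 : s2 >= a k * (N - K) / 2).
  { apply Rle_ge. apply (Rmult_le_reg_l (2*(N-K+1))); [lra|].
    assert (2 * (N - K + 1) * (a k * (N - K) / 2) = a k * (N - K) * (N - K + 1)) by (field). lra. }
  lra. Qed.

Lemma rq_le n a lam y : admissible n y ->
  sum1 n (fun i => a i * y i ^ 2) <= lam * sum1 n (fun i => y i ^ 2) ->
  sum1 n (fun i => a i * y i ^ 2) / sum1 n (fun i => y i ^ 2) <= lam.
Proof. intros Hy H. assert (Hd := den_pos n y Hy).
  apply (Rmult_le_reg_r (sum1 n (fun i => y i ^ 2))); [exact Hd|].
  unfold Rdiv. rewrite Rmult_assoc, Rinv_l by lra. lra. Qed.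

Theorem mainTheorem6 (n : nat) (sigma : nat -> R)
  (hn : (4 <= n)%nat)
  (hpos : forall i : nat, (1 <= i <= n)%nat -> 0 < sigma i)
  (hconc : concave_seq (n + 2) (padded_sq n sigma)) :
  exists M : R, is_max_rquot n sigma M /\
    (INR n - 1) / INR n * sum1 n (fun i => (sigma i)^2) > 2 * M.
Proof.
  set (a := padded_sq n sigma) in *.
  assert (Ha : forall i, (1 <= i <= n)%nat -> a i = sigma i ^ 2).
  { intros i Hi. unfold a, padded_sq. destruct (Nat.eqb_spec i 0); [lia|].
    destruct (Nat.leb_spec i n); [reflexivity|lia]. }
  assert (Ha0 : a 0%nat = 0) by reflexivity.
  assert (Han : a (n+1)%nat = 0).
  { unfold a, padded_sq. destruct (Nat.eqb_spec (n+1) 0); [lia|].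
    destruct (Nat.leb_spec (n+1) n); [lia|reflexivity]. }
  assert (Hapos : forall i, (1 <= i <= n)%nat -> 0 < a i).
  { intros i Hi. rewrite Ha by auto. assert (0 < sigma i) by auto. apply pow_lt; auto. }
  assert (Hc : forall i, (i+2 <= n+1)%nat -> 2 * a (S i) >= a i + a (S (S i))).
  { intros i Hi. assert (H := hconc i ltac:(lia)). lra. }
  assert (Hconv : forall y, sum1 n (fun i => sigma i ^ 2 * y i ^ 2) = sum1 n (fun i => a i * y i ^ 2)).
  { intros y. apply sum1_ext. intros i Hi. rewrite Ha; auto. }
  assert (HS : sum1 n (fun i => sigma i ^ 2) = sum1 n a).
  { apply sum1_ext. intros i Hi. rewrite Ha; auto. }
  destruct (exists_max n a ltac:(lia)) as [lam [[x [Hx Hxeq]] Hub]].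
  destruct (argmax_gen a (fun _ => true) n) as [k [Hk [_ Hkmax]]].
  { exists 1%nat; split; [lia|reflexivity]. }
  assert (HkA : forall i, (1 <= i <= n)%nat -> a i <= a k) by (intros; apply Hkmax; auto).
  set (c := (INR n - 1) / INR n * sum1 n a / 2).
  assert (Hkey : forall y, admissible n y ->
     sum1 n (fun i => a i * y i ^ 2) < c * sum1 n (fun i => y i ^ 2)).
  { intros y Hy.
    assert (Hcond : (forall i, (1 <= i <= n)%nat -> i <> k -> 0 < c - a i) /\
       0 < 1 + (c - a k) * sum1 n (fun i => if Nat.eqb i k then 0 else / (c - a i))).
    { destruct (Nat.eq_dec n 4) as [E4|E4].
      - subst n. assert (H3 := Hc 3%nat ltac:(lia)). change (a (S (S 3))) with (a (4+1)%nat) in H3. rewrite Han in H3.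
        apply (n4_key a k c).
        + unfold c. replace (INR 4) with 4 by (simpl; lra). field.
        + apply Hapos; lia. + apply Hapos; lia. + apply Hapos; lia. + apply Hapos; lia.
        + assert (H := Hc 0%nat ltac:(lia)). rewrite Ha0 in H. lra.
        + apply Hc; lia. + apply Hc; lia.
        + lra.
        + exact Hk. + exact HkA.
      - assert (HT := tent_total n a k Ha0 Han Hc Hk).
        assert (HN : 5 <= INR n) by (replace 5 with (INR 5) by (simpl; lra); apply le_INR; lia).
        assert (HA := Hapos k Hk).
        assert (Hck : a k < c).
        { unfold c. set (S := sum1 n a) in *. set (N := INR n) in *.
          assert (E : (N - 1) / N * S / 2 - a k = ((N - 1) * S - 2 * N * a k) / (2 * N)) by (field; lra).
          assert (0 < ((N - 1) * S - 2 * N * a k) / (2 * N)).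
          { apply Rdiv_lt_0_compat; [|lra].
            assert ((N-1) * S >= (N-1) * (a k * (N + 1) / 2)) by (apply Rle_ge, Rmult_le_compat_l; lra).
            assert (0 < a k * (N*N - 4*N - 1)) by (apply Rmult_lt_0_compat; nra).
            nra. }
          lra. }
        split.
        + intros i Hi _. assert (a i <= a k) by auto. lra.
        + assert (0 < sum1 n (fun i => if Nat.eqb i k then 0 else / (c - a i))).
          { apply (T_pos n k (fun i => c - a i)); [lia|auto|]. intros i Hi _. assert (a i <= a k) by auto. lra. }
          assert (0 < (c - a k) * sum1 n (fun i => if Nat.eqb i k then 0 else / (c - a i))) by (apply Rmult_lt_0_compat; lra).
          lra. }
    destruct Hcond as [Hc1 Hc2].
    assert (P := formL_pos n k (fun i => c - a i) y ltac:(lia) Hk Hc1 (proj2 Hy) (proj1 Hy) Hc2).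
    rewrite (sum1_ext n _ (fun i => c * y i ^ 2 - a i * y i ^ 2)) in P by (intros; ring).
    rewrite sum1_minus, sum1_scal in P. lra. }
  exists lam. split.
  - split.
    + exists x. split; auto. unfold rquot. rewrite Hconv, Hxeq.
      assert (Hd := den_pos n x Hx). field. lra.
    + intros y Hy. unfold rquot. rewrite Hconv. apply rq_le; auto.
  - rewrite HS. assert (Hk2 := Hkey x Hx). rewrite Hxeq in Hk2.
    assert (Hd := den_pos n x Hx).
    assert (lam < c) by (apply (Rmult_lt_reg_r (sum1 n (fun i => x i ^ 2))); lra).
    unfold c in *. lra.
Qed.
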